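(* Let $k\ge2$ be an integer and $\lambda>0$. If the median of the Poisson distribution of order $k$ with parameter $\lambda$ is $0$, then its mode is also $0$ (and $0$ is the unique mode).
   Context: For an integer $k\ge1$ and a real $\lambda>0$, the Poisson distribution of order $k$ with parameter $\lambda$ is the distribution on $\{0,1,2,\dots\}$ with probability mass function $$f_k(n;\lambda)=e^{-k\lambda}\sum_{\substack{n_1,\dots,n_k\ge 0\\ n_1+2n_2+\dots+kn_k=n}}\frac{\lambda^{n_1+\dots+n_k}}{n_1!\cdots n_k!},\qquad n=0,1,2,\dots$$ If $Y$ is a random variable with this distribution, the median is defined as the smallest integer $\nu$ such that $P(Y\le\nu)\ge\frac12$. A mode is any $n$ at which $f_k(n;\lambda)$ attains its global maximum over $n\ge0$. *)

(* Defs.v *)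
From mathcomp Require Import all_boot all_order all_algebra.
From mathcomp Require Import reals sequences exp.
Set Implicit Arguments. Unset Strict Implicit. Unset Printing Implicit Defensive.
Import Order.TTheory GRing.Theory Num.Theory.
Local Open Scope ring_scope.

(* Poisson pmf of order k:
   f_k(n; lam) = e^{-k lam} * sum over (n_1,...,n_k) >= 0 with
   n_1 + 2 n_2 + ... + k n_k = n of lam^(n_1+...+n_k) / (n_1! ... n_k!).
   The tuple is indexed by i : 'I_k representing j = i+1; each n_j <= n
   (since j * n_j <= n), so ranging over {ffun 'I_k -> 'I_n.+1} is exhaustive. *)
Definition poisson_k_pmf (R : realType) (k : nat) (lam : R) (n : nat) : R :=
  expR (- (k%:R * lam)) *
  \sum_(t : {ffun 'I_k -> 'I_n.+1} | (\sum_(i < k) i.+1 * t i)%N == n)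
     lam ^+ (\sum_(i < k) t i)%N / ((\prod_(i < k) (t i)`!)%N)%:R.

Definition poisson_k_cdf (R : realType) (k : nat) (lam : R) (nu : nat) : R :=
  \sum_(m < nu.+1) poisson_k_pmf k lam m.

Definition is_median_poisson_k (R : realType) (k : nat) (lam : R) (nu : nat) : Prop :=
  (2^-1 <= poisson_k_cdf k lam nu) /\
  (forall m : nat, (m < nu)%N -> poisson_k_cdf k lam m < 2^-1).

Definition is_mode_poisson_k (R : realType) (k : nat) (lam : R) (n : nat) : Prop :=
  forall m : nat, poisson_k_pmf k lam m <= poisson_k_pmf k lam n.

(* Main.v *)
Require Import Defs.
From mathcomp Require Import all_boot all_order all_algebra.
From mathcomp Require Import reals sequences exp.
From mathcomp Require Import lra.
Import Order.TTheory GRing.Theory Num.Theory.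
Local Open Scope ring_scope.

Definition term {R : realType} {k N : nat} (lam : R) (t : {ffun 'I_k -> 'I_N}) : R :=
  lam ^+ (\sum_(i < k) t i)%N / ((\prod_(i < k) (t i)`!)%N)%:R.

Lemma term_ge0 (R : realType) (k N : nat) (lam : R) (t : {ffun 'I_k -> 'I_N}) : 0 <= lam -> 0 <= term lam t.
Proof. by move=> l0; rewrite /term divr_ge0 // exprn_ge0. Qed.

Lemma full_sum (R : realType) (k N : nat) (lam : R) :
  \sum_(t : {ffun 'I_k -> 'I_N}) term lam t =
  \prod_(i < k) \sum_(j < N) lam ^+ j / j`!%:R.
Proof.
rewrite bigA_distr_bigA /=; apply: eq_bigr => t _.
rewrite /term prodf_div prodrXr natr_prod //.
Qed.

Lemma partial_exp_le (R : realType) (x : R) (N : nat) : 0 <= x ->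
  \sum_(j < N) x ^+ j / j`!%:R <= expR x.
Proof.
move=> x0.
have -> : \sum_(j < N) x ^+ j / j`!%:R = series (exp_coeff x) N.
  by rewrite /series /= big_mkord.
apply: nondecreasing_cvgn_le; last exact: is_cvg_series_exp_coeff.
apply: nondecreasing_series => n _ _ /=.
by rewrite divr_ge0 // exprn_ge0.
Qed.

Lemma full_le (R : realType) (k N : nat) (lam : R) : 0 <= lam ->
  \sum_(t : {ffun 'I_k -> 'I_N}) term lam t <= expR (k%:R * lam).
Proof.
move=> l0; rewrite full_sum expRM_natl -[in X in _ <= X](card_ord k) -prodr_const.
apply: ler_prod => i _; rewrite partial_exp_le // andbT.
by apply: sumr_ge0 => j _; rewrite divr_ge0 // exprn_ge0.
Qed.

Lemma pmf_eq (R : realType) (k n : nat) (lam : R) :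
  poisson_k_pmf k lam n = expR (- (k%:R * lam)) *
  \sum_(t : {ffun 'I_k -> 'I_n.+1} | (\sum_(i < k) i.+1 * t i)%N == n) term lam t.
Proof. by []. Qed.

Lemma pmf0 (R : realType) (k : nat) (lam : R) :
  poisson_k_pmf k lam 0 = expR (- (k%:R * lam)).
Proof.
rewrite pmf_eq.
have -> : \sum_(t : {ffun 'I_k -> 'I_1} | (\sum_(i < k) i.+1 * t i)%N == 0%N) term lam t
   = \sum_(t : {ffun 'I_k -> 'I_1}) term lam t.
  apply: eq_bigl => t; apply/eqP; apply: big1 => i _.
  by case: (t i) => -[|m] //= _; rewrite muln0.
rewrite full_sum (eq_bigr (fun _ => 1)) ?big1_eq ?mulr1 // => i _.
by rewrite big_ord1 expr0 divr1.
Qed.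

Lemma key_ineq (R : realType) (k N : nat) (lam : R) : (2 <= k)%N -> 0 < lam ->
  \sum_(t : {ffun 'I_k -> 'I_N.+2} | (\sum_(i < k) i.+1 * t i)%N == N.+1) term lam t
  + (1 + lam) <= \sum_(t : {ffun 'I_k -> 'I_N.+2}) term lam t.
Proof.
move=> k2 l0.
have [j hj] : exists j : 'I_k, (j.+1 != N.+1)%N.
  case: N => [|N].
    by exists (Ordinal k2).
  by exists (Ordinal (ltnW k2)).
pose e : {ffun 'I_k -> 'I_N.+2} := [ffun i => if i == j then inord 1 else ord0].
pose t0 : {ffun 'I_k -> 'I_N.+2} := [ffun => ord0].
have e1 : (\sum_(i < k) e i)%N = 1%N.
  rewrite (bigD1 j) //= ffunE eqxx inordK // big1 // => i /negbTE hi.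
  by rewrite ffunE hi.
have ef : (\prod_(i < k) (e i)`!)%N = 1%N.
  rewrite big1 // => i _; rewrite ffunE; case: eqP => _ //.
  by rewrite inordK.
have ew : (\sum_(i < k) i.+1 * e i)%N = j.+1.
  rewrite (bigD1 j) //= ffunE eqxx inordK // muln1 big1 ?addn0 // => i /negbTE hi.
  by rewrite ffunE hi muln0.
have t0w : (\sum_(i < k) i.+1 * t0 i)%N = 0%N.
  by rewrite big1 // => i _; rewrite ffunE muln0.
have tt0 : term lam t0 = 1.
  rewrite /term big1 ?expr0; last by move=> i _; rewrite ffunE.
  by rewrite big1 ?divr1 // => i _; rewrite ffunE.
have te : term lam e = lam by rewrite /term e1 ef expr1 divr1.
have ne : e != t0.
  apply/eqP => /ffunP /(_ j); rewrite !ffunE eqxx => /(congr1 val).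
  by rewrite /= inordK.
rewrite [X in _ <= X](bigID (fun t : {ffun 'I_k -> 'I_N.+2} => (\sum_(i < k) i.+1 * t i)%N == N.+1)) /=.
rewrite lerD2l (bigD1 t0) /=; last by rewrite t0w.
rewrite (bigD1 e) /=; last by rewrite ew hj ne.
rewrite tt0 te addrA lerDl.
by apply: sumr_ge0 => t _; apply: term_ge0; apply: ltW.
Qed.

Lemma pmf_lt (R : realType) (k : nat) (lam : R) N : (2 <= k)%N -> 0 < lam ->
  2^-1 <= poisson_k_pmf k lam 0 -> poisson_k_pmf k lam N.+1 < poisson_k_pmf k lam 0.
Proof.
move=> k2 l0; rewrite pmf0 pmf_eq => hE.
set E := expR _ in hE *.
have E0 : 0 < E by apply: expR_gt0.
have hK : E * expR (k%:R * lam) = 1 by rewrite mulrC expRxMexpNx_1.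
have := @key_ineq R k N lam k2 l0; have := @full_le R k N.+2 lam (ltW l0).
set F := \sum_(t | _) _; set S := \sum_(t | _) _ => h1 h2.
have hS : S <= expR (k%:R * lam) - (1 + lam) by rewrite lerBrDr (le_trans h2).
apply: (le_lt_trans (ler_wpM2l (ltW E0) hS)).
rewrite mulrBr hK mulrDr mulr1.
have : 0 < E * lam by rewrite mulr_gt0.
move=> a; lra.
Qed.

Theorem mainTheorem4 (R : realType) (k : nat) (lam : R) :
  (2 <= k)%N -> 0 < lam ->
  is_median_poisson_k k lam 0%N ->
  is_mode_poisson_k k lam 0%N /\
  (forall n : nat, is_mode_poisson_k k lam n -> n = 0%N).
Proof.
move=> k2 l0 [hm _].
have h0 : 2^-1 <= poisson_k_pmf k lam 0 by move: hm; rewrite /poisson_k_cdf big_ord1.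
split.
  by case=> [|N] //; apply: ltW; apply: pmf_lt.
case=> [|N] // /(_ 0%N) h.
by have := @pmf_lt R k lam N k2 l0 h0; rewrite ltNge h.
Qed.
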